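(* Let $H$ be a graph on $h$ vertices with $\chi(H)=r\geq 3$ and $\gcd(H)=1$. Then for every sufficiently large integer $n$ there exists a balanced $r$-partite graph $G$ on $rn$ vertices with $\delta^*(G)\geq\left(1-\frac{1}{\chi^*(H)}\right)n-1=\left(1-\frac{1}{\chi_{\rm cr}(H)}\right)n-1$ that has no perfect $H$-tiling.
   Context: An $H$-tiling in $G$ is a collection of vertex-disjoint copies of $H$ in $G$; it is perfect if it covers every vertex of $G$. For an $r$-partite graph $G$ with vertex classes $V_1,\dots,V_r$, $G$ is balanced if all classes have the same size, and $\delta^*(G)$ is the largest integer $m$ such that for all $i\neq j$ every vertex of $V_i$ has at least $m$ neighbours in $V_j$. For $H$ with $\chi(H)=r$, let $\mathcal C$ be the set of proper $r$-colourings of $H$ with colour classes $X_1^\phi,\dots,X_r^\phi$, and $\mathcal D(H)=\bigcup_{\phi\in\mathcal C}\{|X_i^\phi|-|X_j^\phi|: i,j\in[r]\}$; $\gcd(H)$ is the greatest common divisor of the elements of $\mathcal D(H)$ if $\mathcal D(H)\ne\{0\}$ and $\infty$ otherwise. $\sigma(H)=\min_{\phi\in\mathcal C,\,i\in[r]}|X_i^\phi|/|V(H)|$, $\chi_{\rm cr}(H)=(\chi(H)-1)/(1-\sigma(H))$, and $\chi^*(H)=\chi_{\rm cr}(H)$ when $\gcd(H)=1$. *)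

(* Defs.v *)
From HB Require Import structures.
From mathcomp Require Import all_boot all_order all_algebra.
Set Implicit Arguments. Unset Strict Implicit. Unset Printing Implicit Defensive.
Import Order.TTheory GRing.Theory Num.Theory.

Definition simple_graph (T : finType) (e : rel T) : Prop :=
  symmetric e /\ irreflexive e.

Definition proper_col (T : finType) (e : rel T) (k : nat) (f : T -> 'I_k) : bool :=
  [forall x, forall y, e x y ==> (f x != f y)].

Definition chromatic_number (T : finType) (e : rel T) (r : nat) : Prop :=
  (exists f : T -> 'I_r, proper_col e f) /\
  (forall k, k < r -> ~ exists f : T -> 'I_k, proper_col e f).

Definition colour_class (T : finType) (k : nat) (f : T -> 'I_k) (i : 'I_k) : {set T} :=
  [set x | f x == i].

(* gcd(H) = 1 : the only natural number dividing every element of D(H) is 1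
   (if D(H) = {0}, gcd(H) = infinity and every d divides, so this fails). *)
Definition gcd_one (T : finType) (e : rel T) (r : nat) : Prop :=
  forall d : nat,
    (forall f : {ffun T -> 'I_r}, proper_col e f ->
       forall i j : 'I_r,
         (d%:Z %| ((#|colour_class f i|%:Z - #|colour_class f j|%:Z)%R))%Z) ->
    d = 1%N.

(* min over proper r-colourings phi and colours i of |X_i^phi|
   (default #|T| is harmless: every class has size <= #|T|). *)
Definition min_class_size (T : finType) (e : rel T) (r : nat) : nat :=
  \big[minn/#|T|]_(f : {ffun T -> 'I_r} | proper_col e f)
     \big[minn/#|T|]_(i < r) #|colour_class f i|.

Definition sigma (T : finType) (e : rel T) (r : nat) : rat :=
  ((min_class_size e r)%:R / #|T|%:R)%R.

Definition chi_cr (T : finType) (e : rel T) (r : nat) : rat :=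
  ((r%:R - 1) / (1 - sigma e r))%R.

(* chi^*(H) = chi_cr(H) when gcd(H) = 1 (the only case used). *)
Definition chi_star (T : finType) (e : rel T) (r : nat) : rat := chi_cr e r.

Definition balanced_rpartite (r n : nat) (E : rel ('I_r * 'I_n)) : Prop :=
  simple_graph E /\ (forall x y, x.1 = y.1 -> ~~ E x y).

(* delta^*(G): min over vertices v and classes j <> class of v of the number of
   neighbours of v in V_j (default n is harmless: such degrees are <= n). *)
Definition delta_star (r n : nat) (E : rel ('I_r * 'I_n)) : nat :=
  \big[minn/n]_(v : 'I_r * 'I_n)
     \big[minn/n]_(j < r | j != v.1) #|[set u : 'I_r * 'I_n | (u.1 == j) && E v u]|.

Definition perfect_tiling (T : finType) (e : rel T) (U : finType) (E : rel U) : Prop :=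
  exists (k : nat) (phi : 'I_k -> T -> U),
    (forall i x y, e x y -> E (phi i x) (phi i y)) /\
    injective (fun p : 'I_k * T => phi p.1 p.2) /\
    (forall u : U, exists p : 'I_k * T, phi p.1 p.2 = u).

(* Main.v *)
Require Import Defs.
From HB Require Import structures.
From mathcomp Require Import all_boot all_order all_algebra.
From mathcomp Require Import zify ring lra.
Import Order.TTheory GRing.Theory Num.Theory.

Local Open Scope nat_scope.
Lemma bigmin_leq (I : eqType) (s : seq I) (P : pred I) (F : I -> nat) d i :
  i \in s -> P i -> \big[minn/d]_(j <- s | P j) F j <= F i.
Proof.
elim: s => // a s IH; rewrite inE big_cons => /orP [/eqP<- -> | /IH H Pi].
  exact: geq_minl.
case: (P a); last exact: H.
exact: leq_trans (geq_minr _ _) (H Pi).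
Qed.

Lemma bigmin_geq (I : Type) (s : seq I) (P : pred I) (F : I -> nat) d (Q : nat -> Prop) :
  Q d -> (forall j, P j -> Q (F j)) -> Q (\big[minn/d]_(j <- s | P j) F j).
Proof.
move=> Qd QF; apply: big_ind => //.
by move=> x y Qx Qy; rewrite /minn; case: ltnP.
Qed.

Lemma bigmin_leq_fin {I : finType} (P : pred I) (F : I -> nat) (d0 : nat) (i : I) :
  P i -> \big[minn/d0]_(j | P j) F j <= F i.
Proof. exact: bigmin_leq (mem_index_enum i). Qed.

Lemma mu_le (T : finType) (e : rel T) (r : nat) (f : {ffun T -> 'I_r}) i :
  proper_col e f -> min_class_size e r <= #|colour_class f i|.
Proof.
move=> pf; rewrite /min_class_size.
have H1 := bigmin_leq_fin (fun f : {ffun T -> 'I_r} => proper_col e f) (fun f : {ffun T -> 'I_r} => \big[minn/#|T|]_(i < r) #|colour_class f i|) #|T| f pf.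
apply: leq_trans H1 _.
exact: (bigmin_leq_fin xpredT (fun i => #|colour_class f i|) #|T| i).
Qed.

Lemma card_le_inj (n : nat) (A : {set 'I_n}) (g : nat -> nat) N :
  {in A &, forall x y : 'I_n, g x = g y -> x = y} -> (forall x : 'I_n, x \in A -> g x < N) -> #|A| <= N.
Proof.
move=> ginj gN; rewrite cardE -(size_map (fun x : 'I_n => g x)) -[N](size_iota 0).
apply: uniq_leq_size.
  rewrite map_inj_in_uniq ?enum_uniq // => x y; rewrite !mem_enum; exact: ginj.
by move=> _ /mapP [x xA ->]; rewrite mem_iota add0n gN // -mem_enum.
Qed.

Lemma class_nonempty (T : finType) (e : rel T) (r : nat) (f : T -> 'I_r) i :
  chromatic_number e r -> 2 <= r -> proper_col e f -> 0 < #|[set x | f x == i]|.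
Proof.
move=> [_ Hc] r2 pf; rewrite lt0n; apply/negP => /eqP /cards0_eq H.
have j0 : 'I_r.-1 by exists 0; lia.
apply: (Hc r.-1); first lia.
exists (fun x => odflt j0 (unlift i (f x))).
apply/forallP => x; apply/forallP => y; apply/implyP => exy.
have := (forallP (forallP pf x) y); move/implyP/(_ exy).
have nin : forall z, f z != i.
  move=> z; apply/negP => /eqP Hz.
  have : z \in [set x | f x == i] by rewrite inE Hz.
  by rewrite H inE.
have nx := nin x; have ny := nin y.
case: unliftP nx => [a -> _| ->]; last by rewrite eqxx.
case: unliftP ny => [b -> _| ->]; last by rewrite eqxx.
by apply: contra => /eqP /= ->.
Qed.
Definition col (q : nat) {n : nat} (t : nat) (p : 'I_n) : 'I_q.+3 :=
  if p < t then ord_max else inord ((p - t) %% q.+2).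

Lemma col_max q n t (p : 'I_n) : (col q t p == ord_max) = (p < t).
Proof.
rewrite /col; case: ltnP => [_|_]; first by rewrite eqxx.
rewrite -(inj_eq val_inj) /= inordK; last by apply: leqW; rewrite ltn_mod.
by apply/negbTE; rewrite neq_ltn ltn_mod.
Qed.

Lemma count_bound q n t h mu (a : 'I_q.+3) : 0 < h -> t * h < mu * n ->
  mu * n <= t.+1 * h -> mu * q.+3 <= h ->
  #|[set p : 'I_n | col q t p == a]| * q.+2 * h <= (h - mu) * n + q.+2 * h.
Proof.
move=> h0 t1 t2 mur.
case: (eqVneq a ord_max) => [-> | na].
  have c : #|[set p : 'I_n | col q t p == ord_max]| <= t.
    apply: (card_le_inj _ _ id) => [x y _ _ /val_inj //| x].
    by rewrite inE col_max.
  set c0 := #|_| in c *.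
  have s1 : c0 * q.+2 * h <= t * h * q.+2.
    by rewrite mulnAC; apply: leq_mul => //; apply: leq_mul.
  have s2 : t * h * q.+2 <= mu * n * q.+2 by apply: leq_mul => //; apply: ltnW.
  have s3 : mu * n * q.+2 <= (h - mu) * n.
    rewrite mulnAC; apply: leq_mul => //; lia.
  lia.
set D := (n.-1 - t) %/ q.+2.
have c : #|[set p : 'I_n | col q t p == a]| <= D.+1.
  apply: (card_le_inj _ _ (fun p => (p - t) %/ q.+2)).
    move=> x y; rewrite !inE /col.
    case: ltnP => [_ /eqP E| xt]; first by rewrite -E eqxx in na.
    case: ltnP => [_ _ /eqP E| yt]; first by rewrite -E eqxx in na.
    move=> /eqP Ex /eqP Ey Exy; apply: val_inj => /=.
    have : (x - t) %% q.+2 = (y - t) %% q.+2.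
      have := congr1 val (etrans Ex (esym Ey)).
      by rewrite /= !inordK // ltnW // ltnS ltn_mod.
    move=> Em; have : x - t = y - t by rewrite (divn_eq (x - t) q.+2) (divn_eq (y - t) q.+2) Em Exy.
    lia.
  move=> x _; rewrite ltnS /D leq_div2r //.
  have := ltn_ord x; lia.
set c0 := #|_| in c *.
have d1 : D * q.+2 <= n.-1 - t by apply: leq_trunc_div.
have : c0 * q.+2 * h <= D * q.+2 * h + q.+2 * h by nia.
have : (n.-1 - t) * h <= (h - mu) * n.
  move: t2 mur; clear; case: n => [|m] t2 mur; first by rewrite sub0n.
  rewrite /= mulnBl mulnBl mulnS mulSn in t2 *.
  have : mu <= h by lia.
  nia.
nia.
Qed.
Local Open Scope ring_scope.
Lemma rat_bound (q n c h mu : nat) : (0 < h)%N -> (mu <= h)%N -> (c <= n)%N ->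
  (c * q.+2 * h <= (h - mu) * n + q.+2 * h)%N ->
  ((1 - 1 / (((q.+3)%:R - 1) / (1 - mu%:R / h%:R))) * n%:R - 1 <= (n - c)%:R :> rat)%R.
Proof.
move=> h0 muh cn H.
have Hr : (c%:R * q.+2%:R * h%:R <= (h%:R - mu%:R) * n%:R + q.+2%:R * h%:R :> rat)%R.
  by rewrite -natrB // -!natrM -natrD ler_nat.
rewrite natrB //.
have hp : (0 < h%:R :> rat)%R by rewrite ltr0n.
have e1 : ((q.+3)%:R - 1 = q.+2%:R :> rat)%R by rewrite -natr1 addrK.
rewrite e1.
have e2 : (1 - 1 / (q.+2%:R / (1 - mu%:R / h%:R)) = 1 - (h%:R - mu%:R) / (h%:R * q.+2%:R) :> rat)%R.
  rewrite div1r invf_div; field.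
  apply/andP; split; last by rewrite pnatr_eq0 -lt0n.
  by rewrite -natrD pnatr_eq0.
rewrite e2.
set X := ((h%:R - mu%:R) * n%:R : rat)%R in Hr *.
set Y := (h%:R * q.+2%:R : rat)%R.
have Yp : (0 < Y)%R by rewrite /Y -natrM ltr0n; lia.
have : (c%:R <= (X + Y) / Y :> rat)%R.
  rewrite ler_pdivlMr // /Y.
  have -> : c%:R * (h%:R * q.+2%:R) = c%:R * q.+2%:R * h%:R :> rat by ring.
  by rewrite (mulrC h%:R).
have -> : ((X + Y) / Y = X / Y + 1 :> rat)%R by field; lra.
have -> : (1 - (h%:R - mu%:R) / Y) * n%:R - 1 = n%:R - (X / Y + 1) :> rat by rewrite /X; field; lra.
lra.
Qed.
Local Close Scope ring_scope.
Lemma card_max q n t : #|[set p : 'I_n | col q t p == ord_max]| <= t.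
Proof.
apply: (card_le_inj _ _ id) => [x y _ _ /val_inj //| x].
by rewrite inE col_max.
Qed.

Theorem mainTheorem9 (T : finType) (e : rel T) (r : nat) :
  simple_graph e -> chromatic_number e r -> 3 <= r -> gcd_one e r ->
  exists n0 : nat, forall n : nat, n0 <= n ->
    exists E : rel ('I_r * 'I_n),
      balanced_rpartite E /\
      ((delta_star E)%:R >= (1 - 1 / chi_star e r) * n%:R - 1 :> rat)%R /\
      ~ perfect_tiling e E.
Proof.
move=> Hs Hchi Hr; move: Hchi; case: r Hr => [|[|[|q]]] // _ Hchi _.
set h := #|T|; set mu := min_class_size e q.+3.
have [[f0 pf0] _] := Hchi.
pose F0 : {ffun T -> 'I_q.+3} := [ffun x => f0 x].
have pF0 : proper_col e F0.
  apply/forallP => x; apply/forallP => y; rewrite !ffunE.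
  exact: (forallP (forallP pf0 x) y).
have cne : forall (f : {ffun T -> 'I_q.+3}) i, proper_col e f -> 0 < #|colour_class f i|.
  by move=> f i pf; exact: (@class_nonempty T e q.+3 (fun x => f x) i Hchi isT pf).
have h0 : 0 < h.
  apply: leq_trans (cne F0 ord0 pF0) _; exact: max_card.
have mu0 : 0 < mu.
  rewrite /mu /min_class_size; apply: (bigmin_geq _ _ _ _ _ (fun x => 0 < x)) => // f pf.
  by apply: (bigmin_geq _ _ _ _ _ (fun x => 0 < x)) => // i _; apply: cne.
have mur : mu * q.+3 <= h.
  have -> : h = \sum_(i < q.+3) #|colour_class F0 i|.
    rewrite /h -sum1_card (partition_big F0 xpredT) //=.
    apply: eq_bigr => i _; rewrite -sum1_card; apply: eq_bigl => x.
    by rewrite /colour_class inE.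
  rewrite mulnC; have <- : \sum_(i < q.+3) mu = q.+3 * mu by rewrite sum_nat_const card_ord.
  apply: leq_sum => i _.
  exact: mu_le.
exists 1 => n Hn.
set t := (mu * n).-1 %/ h.
have mn : 0 < mu * n by rewrite muln_gt0 mu0.
have t1 : t * h < mu * n by have := leq_trunc_div (mu * n).-1 h; lia.
have t2 : mu * n <= t.+1 * h by have := ltn_ceil (mu * n).-1 h0; lia.
pose E : rel ('I_q.+3 * 'I_n) := fun u v => (u.1 != v.1) && (col q t u.2 != col q t v.2).
exists E; split.
  split; last by move=> x y Hxy; rewrite /E Hxy eqxx.
  split; last by move=> u; rewrite /E eqxx.
  by move=> u v; rewrite /E eq_sym (eq_sym (col q t u.2)).
split.
  have key : forall c, c <= n ->
      c * q.+2 * h <= (h - mu) * n + q.+2 * h ->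
      ((1 - 1 / chi_star e q.+3) * n%:R - 1 <= (n - c)%:R :> rat)%R.
    by move=> c cn H; rewrite /chi_star /chi_cr /sigma; apply: rat_bound => //; lia.
  rewrite /delta_star.
  apply: (bigmin_geq _ _ _ _ _ (fun x => ((1 - 1 / chi_star e q.+3) * n%:R - 1 <= x%:R :> rat)%R)).
    by have := key 0 (leq0n n); rewrite subn0 mul0n; apply.
  move=> v _.
  apply: (bigmin_geq _ _ _ _ _ (fun x => ((1 - 1 / chi_star e q.+3) * n%:R - 1 <= x%:R :> rat)%R)).
    by have := key 0 (leq0n n); rewrite subn0 mul0n; apply.
  move=> j jv.
  set A := [set p : 'I_n | col q t p == col q t v.2].
  apply: (le_trans (key #|A| _ _)).
  - by have := max_card A; rewrite card_ord.
  - exact: count_bound.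
  rewrite ler_nat.
  have -> : n - #|A| = #|~: A| by have := cardsC A; rewrite card_ord => Hc; rewrite -{1}Hc addKn.
  rewrite -(card_imset _ (f := fun p => (j, p))); last by move=> x y [].
  apply: subset_leq_card; apply/subsetP => _ /imsetP [p pA ->].
  rewrite !inE /E /= eqxx /= eq_sym jv /=.
  by move: pA; rewrite !inE eq_sym.
move=> [k [phi [Hedge [Hinj Hsurj]]]].
pose F (p : 'I_k * T) := phi p.1 p.2.
have c1 : q.+3 * n <= k * h.
  have : #|[set: 'I_q.+3 * 'I_n]| <= #|[set: 'I_k * T]|.
    apply: leq_trans (leq_imset_card F _).
    apply: subset_leq_card; apply/subsetP => u _.
    have [p <-] := Hsurj u; exact: imset_f (in_setT p).
  by rewrite !cardsT !card_prod !card_ord.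
pose fi (i : 'I_k) : {ffun T -> 'I_q.+3} := [ffun x => col q t (phi i x).2].
have pfi : forall i, proper_col e (fi i).
  move=> i; apply/forallP => x; apply/forallP => y; apply/implyP => exy.
  by rewrite !ffunE; have /andP [_ ->] := Hedge i x y exy.
have c2 : k * mu <= \sum_(i < k) #|colour_class (fi i) ord_max|.
  have <- : \sum_(i < k) mu = k * mu by rewrite sum_nat_const card_ord.
  apply: leq_sum => i _.
  exact: mu_le.
set S := [set p : 'I_k * T | col q t (F p).2 == ord_max].
have c3 : \sum_(i < k) #|colour_class (fi i) ord_max| = #|S|.
  rewrite -sum1_card big_mkcond /=.
  under eq_bigr => i _ do rewrite -sum1_card big_mkcond /=.
  rewrite pair_big /= [RHS]big_mkcond /=; apply: eq_bigr => -[i x] _ /=.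
  by rewrite /colour_class !inE ffunE.
have c4 : #|S| <= q.+3 * t.
  set S' := [set u : 'I_q.+3 * 'I_n | col q t u.2 == ord_max].
  have : #|S| <= #|S'|.
    rewrite -(card_imset _ (f := F)); last by move=> x y /Hinj.
    apply: subset_leq_card; apply/subsetP => _ /imsetP [p pS ->].
    by move: pS; rewrite !inE.
  have -> : S' = setX [set: 'I_q.+3] [set p : 'I_n | col q t p == ord_max].
    by apply/setP => -[a b]; rewrite !inE.
  rewrite cardsX cardsT card_ord => H; apply: leq_trans H _.
  by rewrite leq_mul2l card_max orbT.
have c5 : k * mu <= q.+3 * t by rewrite (leq_trans c2) // c3.
have : k * mu * h <= q.+3 * t * h by rewrite leq_mul2r c5 orbT.
have : q.+3 * (t * h) < q.+3 * (mu * n) by rewrite ltn_mul2l.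
have : mu * (q.+3 * n) <= mu * (k * h) by rewrite leq_mul2l c1 orbT.
nia.
Qed.
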